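(* There is no Belyi map $\mathbb{P}^1\to\mathbb{P}^1$ with passport $[5\,3/2^4/2^4]$, and there is no Belyi map $\mathbb{P}^1\to\mathbb{P}^1$ with passport $[5\,4\,3/2^6/2^4\,4]$.
   Context: A Belyi map on a compact Riemann surface $X$ is a nonconstant meromorphic function $f:X\to\mathbb{P}^1$ unramified outside $\{0,1,\infty\}$. Its passport $[a_1^{p_1}\cdots/b_1^{q_1}\cdots/c_1^{r_1}\cdots]$ lists the ramification indices of the points in $f^{-1}(0)$, $f^{-1}(1)$, $f^{-1}(\infty)$ respectively, with exponents denoting repetition (so e.g. $[5\,3/2^4/2^4]$ means degree 8, fiber over $0$ consisting of points of ramification indices 5 and 3, and fibers over $1$ and $\infty$ each consisting of four points of ramification index 2). *)

(* Defs.v *)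
From mathcomp Require Import all_boot all_order all_algebra.
Set Implicit Arguments. Unset Strict Implicit. Unset Printing Implicit Defensive.
Import GRing.Theory Num.Theory.
Local Open Scope ring_scope.

(* A rational function f : P^1 -> P^1 over an algebraically closed field C
   of characteristic 0 is given by a coprime pair (p, q) of polynomials,
   f = p / q.  Points of P^1 are [option C] with [None] = infinity. *)
Section Belyi.
Variable C : numClosedFieldType.

Definition rdeg (p q : {poly C}) : nat := (maxn (size p) (size q)).-1.

(* polynomial whose zeros (with multiplicity) form the finite part of the
   fiber f^{-1}(c): p - c q for finite c, q for c = infinity *)
Definition fib_poly (p q : {poly C}) (c : option C) : {poly C} :=
  match c with Some c => p - c *: q | None => q end.

(* multiplicity of the point P in the fiber over c, i.e. the ramification
   index e_P of f at P when f(P) = c, and 0 when f(P) <> c.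
   At P = infinity: max(deg p,deg q) - deg(fib_poly c). *)
Definition fmult (p q : {poly C}) (P c : option C) : nat :=
  match P with
  | Some x => mup x (fib_poly p q c)
  | None => (maxn (size p) (size q) - size (fib_poly p q c))%N
  end.

(* the fiber of f over c has ramification indices given (as a multiset)
   by the list [l]: there is a duplicate-free list of points containing
   every point of the fiber, whose multiplicities form a permutation of l *)
Definition fiber_type (p q : {poly C}) (c : option C) (l : seq nat) : Prop :=
  exists s : seq (option C),
    [/\ uniq s, (forall P, (0 < fmult p q P c)%N -> P \in s)
      & perm_eq [seq fmult p q P c | P <- s] l].

Definition is_Belyi_passport (p q : {poly C}) (l0 l1 linf : seq nat) : Prop :=
  [/\ coprimep p q /\ (0 < rdeg p q)%N,
      (* unramified outside {0,1,oo} *)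
      (forall c : C, c != 0 -> c != 1 -> forall P, (fmult p q P (Some c) <= 1)%N),
      fiber_type p q (Some 0) l0,
      fiber_type p q (Some 1) l1
    & fiber_type p q None linf].

Definition exists_Belyi (l0 l1 linf : seq nat) : Prop :=
  exists p q : {poly C}, is_Belyi_passport p q l0 l1 linf.

End Belyi.

(* Main.v *)
Require Import Defs.
From mathcomp Require Import all_boot all_order all_algebra zify ring.
Set Implicit Arguments. Unset Strict Implicit. Unset Printing Implicit Defensive.
Import GRing.Theory Num.Theory.
Local Open Scope ring_scope.

Definition gm (C : numClosedFieldType) (N : nat) (g : {poly C}) (P : option C) : nat :=
  match P with Some x => mup x g | None => (N - size g)%N end.

Lemma fmultE (C : numClosedFieldType) (p q : {poly C}) P c :
  fmult p q P c = gm (maxn (size p) (size q)) (fib_poly p q c) P.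
Proof. by case: P. Qed.

Lemma mup_XsubC1 (C : numClosedFieldType) (x a : C) :
  mup x ('X - a%:P) = (a == x) :> nat.
Proof. by have := @mup_XsubCX _ 1 x a; rewrite expr1 => ->; case: eqP. Qed.

Lemma gmM (C : numClosedFieldType) (NA NB : nat) (A B : {poly C}) P :
  A != 0 -> B != 0 -> (size A <= NA)%N -> (size B <= NB)%N ->
  gm (NA + NB).-1 (A * B) P = (gm NA A P + gm NB B P)%N.
Proof.
move=> A0 B0 sA sB; case: P => [x|] /=; first by rewrite mupM.
have sAB : size (A * B) = (size A + size B).-1 := size_mul A0 B0.
have h1 : (0 < size A)%N by rewrite size_poly_gt0.
have h2 : (0 < size B)%N by rewrite size_poly_gt0.
rewrite sAB.
have key : forall a b : nat, (0 < a)%N -> (0 < b)%N -> (a <= NA)%N -> (b <= NB)%N ->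
  ((NA + NB).-1 - (a + b).-1 = (NA - a) + (NB - b))%N by move=> *; lia.
exact: key.
Qed.

Lemma sum_eqind (C : numClosedFieldType) (s : seq (option C)) j :
  uniq s -> j \in s -> (\sum_(P <- s) (P == j : nat) = 1)%N.
Proof.
move=> us js; transitivity (count_mem j s); last by rewrite count_uniq_mem // js.
clear us js; elim: s => [|x s IH]; first by rewrite big_nil.
by rewrite big_cons IH /=.
Qed.

Lemma gm_sum (C : numClosedFieldType) k (N : nat) (g : {poly C}) (s : seq (option C)) :
  (size g < k)%N -> g != 0 -> (size g <= N)%N -> uniq s ->
  (forall P, (0 < gm N g P)%N -> P \in s) ->
  (\sum_(P <- s) gm N g P = N.-1)%N.
Proof.
elim: k N g => // k IH N g sgk g0 sgN us cov.
have [s1|s1] := eqVneq (size g) 1%N.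
  have gC : forall P, gm N g P = ((P == None) * N.-1)%N.
    case=> [x|] /=; last by rewrite s1 subn1 mul1n.
    rewrite mupNroot //; rewrite (size1_polyC (eq_leq s1)) rootC.
    apply: contra g0 => /eqP c0; rewrite (size1_polyC (eq_leq s1)) c0 //.
  rewrite (eq_bigr _ (fun P _ => gC P)) -big_distrl /=.
  case: (posnP N.-1) => [->|Np]; first by rewrite muln0.
  rewrite sum_eqind ?mul1n //; apply: cov; rewrite /= s1; lia.
case/closed_rootP: s1 => a /factor_theorem [g' Dg].
have g'0 : g' != 0 by apply: contra g0 => /eqP g'0; rewrite Dg g'0 mul0r.
have sg : size g = (size g').+1.
  by rewrite Dg size_mul ?polyXsubC_eq0 // size_XsubC addn2.
have gE : forall P, gm N g P = (gm N.-1 g' P + (P == Some a))%N.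
  case=> [x|] /=.
    rewrite Dg mupM ?polyXsubC_eq0 // mup_XsubC1; congr (_ + _)%N.
    by rewrite eq_sym.
  rewrite sg; have key : forall n, (N - n.+1 = N.-1 - n + 0)%N by move=> n; lia.
  exact: key.
rewrite (eq_bigr _ (fun P _ => gE P)) big_split /= sum_eqind //; last first.
  by apply: cov; rewrite gE eqxx; lia.
have sg'0 : (0 < size g')%N by rewrite size_poly_gt0.
have N2 : (2 <= N)%N by move: sgN; rewrite sg; move: sg'0; clear; lia.
rewrite (IH N.-1 g') //.
- by move: N2; clear; lia.
- by move: sgk; rewrite sg.
- by move: sgN; rewrite sg; case: (N).
by move=> P HP; apply: cov; rewrite gE; move: HP; clear; lia.
Qed.
Lemma gm_sqrt (C : numClosedFieldType) k (N : nat) (g : {poly C}) :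
  (size g < k)%N -> g != 0 -> (size g <= N)%N -> (forall P, ~~ odd (gm N g P)) ->
  exists b (S : {poly C}) (m : nat),
    [/\ b != 0, g = b *: S ^+ 2, N = (m + m).+1 & (size S <= m.+1)%N].
Proof.
elim: k N g => // k IH N g sgk g0 sgN ev.
have [s1|s1] := eqVneq (size g) 1%N.
  have gc := size1_polyC (eq_leq s1).
  have c0 : g`_0 != 0 by apply: contra g0 => /eqP c0; rewrite gc c0.
  have evN : ~~ odd (N - 1) by have := ev None; rewrite /= s1.
  exists g`_0, 1, (N - 1)./2; split => //.
  - by rewrite expr1n -mul_polyC mulr1.
  - have := odd_double_half (N - 1); rewrite (negbTE evN) add0n -addnn => e.
    move: sgN; rewrite s1 => sgN; rewrite e; move: sgN; clear; lia.
  - by rewrite size_poly1.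
case/closed_rootP: s1 => a ra.
have ma : (0 < mup a g)%N by rewrite -XsubC_dvd // -root_factor_theorem.
have ma2 : (2 <= mup a g)%N.
  have := ev (Some a); rewrite /=; move: ma; case: (mup a g) => // [[]] //.
have /dvdpP [g' Dg] : ('X - a%:P) ^+ 2 %| g by rewrite -mup_geq.
have g'0 : g' != 0 by apply: contra g0 => /eqP g'0; rewrite Dg g'0 mul0r.
have X0 : ('X - a%:P) ^+ 2 != 0 by rewrite expf_neq0 // polyXsubC_eq0.
have sg : size g = (size g').+2.
  by rewrite Dg size_mul // size_exp_XsubC addn3.
have ev' : forall P, ~~ odd (gm N.-2 g' P).
  case=> [x|] /=.
    have := ev (Some x); rewrite /= Dg mupM // mup_XsubCX oddD.
    by case: (a == x) => //; rewrite addbF.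
  have := ev None; rewrite /= sg.
  have key : forall n, (N - n.+2 = N.-2 - n)%N by move=> n; lia.
  by rewrite key.
have h1 : (size g' < k)%N by move: sgk; rewrite sg ltnS; apply: ltnW.
have h3 : (size g' <= N.-2)%N.
  have key : forall x, (x.+2 <= N -> x <= N.-2)%N by move=> x; lia.
  by apply: key; rewrite -sg.
have [b [S' [m' [b0 Dg' eN sS']]]] := IH N.-2 g' h1 g'0 h3 ev'.
exists b, (S' * ('X - a%:P)), m'.+1; split => //.
- by rewrite Dg Dg' exprMn -!mul_polyC [RHS]mulrA.
- have sg'0 : (0 < size g')%N by rewrite size_poly_gt0.
  have N3 : (3 <= N)%N by move: sgN; rewrite sg; move: sg'0; clear; lia.
  move: eN N3; clear; lia.
- apply: leq_trans (size_polyMleq _ _) _; rewrite size_XsubC addn2 /=.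
  by [].
Qed.

Lemma no_split1 (r : seq (nat * nat)) :
  perm_eq [seq (x.1 + x.2)%N | x <- r] [:: 5; 3]%N ->
  all (fun x => (x.1 == 0%N) || (x.2 == 0%N)) r ->
  sumn (map fst r) = sumn (map snd r) -> False.
Proof.
move=> pm; have := perm_size pm; rewrite size_map.
case: r pm => [|[a1 b1] [|[a2 b2] [|]]] //= pm _.
have h1 : (a1 + b1)%N \in [:: 5; 3]%N by rewrite -(perm_mem pm) mem_head.
have h2 : (a2 + b2)%N \in [:: 5; 3]%N by rewrite -(perm_mem pm) !inE eqxx orbT.
have u : uniq [:: (a1 + b1)%N; (a2 + b2)%N] by rewrite (perm_uniq pm).
move: h1 h2; rewrite !inE => /orP[]/eqP h1 /orP[]/eqP h2;
  rewrite /= h1 h2 in u => //;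
  rewrite !andbT => /andP[/orP[]/eqP e1 /orP[]/eqP e2]; lia.
Qed.

Lemma no_split2 (r : seq (nat * nat)) :
  perm_eq [seq (x.1 + x.2)%N | x <- r] [:: 5; 4; 3]%N ->
  all (fun x => (x.1 == 0%N) || (x.2 == 0%N)) r ->
  sumn (map fst r) = sumn (map snd r) -> False.
Proof.
move=> pm; have := perm_size pm; rewrite size_map.
case: r pm => [|[a1 b1] [|[a2 b2] [|[a3 b3] [|]]]] //= pm _.
have h1 : (a1 + b1)%N \in [:: 5; 4; 3]%N by rewrite -(perm_mem pm) mem_head.
have h2 : (a2 + b2)%N \in [:: 5; 4; 3]%N by rewrite -(perm_mem pm) !inE eqxx !orbT.
have h3 : (a3 + b3)%N \in [:: 5; 4; 3]%N by rewrite -(perm_mem pm) !inE eqxx !orbT.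
have u : uniq [:: (a1 + b1)%N; (a2 + b2)%N; (a3 + b3)%N] by rewrite (perm_uniq pm).
move: h1 h2 h3; rewrite !inE => /or3P[]/eqP h1 /or3P[]/eqP h2 /or3P[]/eqP h3;
  rewrite /= h1 h2 h3 in u => //;
  rewrite !andbT => /and3P[/orP[]/eqP e1 /orP[]/eqP e2 /orP[]/eqP e3]; lia.
Qed.

Lemma even_fiber (C : numClosedFieldType) (p q : {poly C}) c l :
  fiber_type p q c l -> all (fun k => ~~ odd k) l ->
  forall P, ~~ odd (gm (maxn (size p) (size q)) (fib_poly p q c) P).
Proof.
case=> s [us cov pm] al P.
have [->//|pos] := posnP (gm (maxn (size p) (size q)) (fib_poly p q c) P).
have Ps : P \in s by apply: cov; rewrite fmultE.
have : fmult p q P c \in l by rewrite -(perm_mem pm); apply: map_f.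
by rewrite fmultE => /(allP al).
Qed.

Lemma key_split (C : numClosedFieldType) (p q : {poly C}) l0 l1 linf :
  is_Belyi_passport p q l0 l1 linf ->
  all (fun k => ~~ odd k) l1 -> all (fun k => ~~ odd k) linf ->
  exists r : seq (nat * nat),
    [/\ perm_eq [seq (x.1 + x.2)%N | x <- r] l0,
        all (fun x => (x.1 == 0%N) || (x.2 == 0%N)) r
      & sumn (map fst r) = sumn (map snd r)].
Proof.
case=> [[cop deg] _ F0 F1 Finf] e1 einf.
set N := maxn (size p) (size q).
have degN : (0 < N.-1)%N by [].
have q0 : q != 0.
  apply/negP => /eqP E; move: cop deg; rewrite E /coprimep gcdp0 => /eqP s1.
  by rewrite /rdeg s1 size_poly0.
have p0 : p != 0.
  apply/negP => /eqP E; move: cop deg; rewrite E /coprimep gcd0p => /eqP s1.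
  by rewrite /rdeg s1 size_poly0.
have pq0 : p - q != 0.
  apply/negP; rewrite subr_eq0 => /eqP E; move: cop deg; rewrite E coprimepp => /eqP s1.
  by rewrite /rdeg s1.
have ev_q : forall P, ~~ odd (gm N q P) := even_fiber Finf einf.
have ev_pq : forall P, ~~ odd (gm N (p - q) P).
  by move=> P; have := even_fiber F1 e1 P; rewrite /= scale1r.
have sq : (size q <= N)%N by apply: leq_maxr.
have spq : (size (p - q)%R <= N)%N.
  by apply: leq_trans (size_polyD _ _) _; rewrite size_polyN geq_max leq_maxl leq_maxr.
have [b1 [S [m [b10 Dq eN sS]]]] := gm_sqrt (ltnSn _) q0 sq ev_q.
have [b2 [R [m2 [b20 Dpq eN2 sR]]]] := gm_sqrt (ltnSn _) pq0 spq ev_pq.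
have em : m2 = m by move: eN eN2; clear; lia.
rewrite em in sR; clear eN2 em m2.
set c1 := sqrtC b1; set c2 := sqrtC b2.
have c1E : c1 ^+ 2 = b1 by apply: sqrtCK.
have c2E : c2 ^+ 2 = b2 by apply: sqrtCK.
have c10 : c1 != 0 by apply: contra b10 => /eqP c10; rewrite -c1E c10 expr0n.
have c20 : c2 != 0 by apply: contra b20 => /eqP c20; rewrite -c2E c20 expr0n.
have ic10 : 'i * c1 != 0 by rewrite mulf_neq0 // neq0Ci.
set U := c2 *: R; set V := ('i * c1) *: S.
set A := U + V; set B := U - V.
have pAB : p = A * B.
  have -> : A * B = U ^+ 2 - V ^+ 2 by rewrite /A /B; ring.
  rewrite /U /V -!mul_polyC !exprMn -!polyC_exp c2E exprMn sqrCi c1E mulN1r.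
  by rewrite polyCN mulNr opprK !mul_polyC -Dq -Dpq subrK.
have A0 : A != 0 by apply: contra p0 => /eqP A0; rewrite pAB A0 mul0r.
have B0 : B != 0 by apply: contra p0 => /eqP B0; rewrite pAB B0 mulr0.
have sU : (size U <= m.+1)%N by apply: leq_trans (size_scale_leq _ _) sR.
have sV : (size V <= m.+1)%N by apply: leq_trans (size_scale_leq _ _) sS.
have sA : (size A <= m.+1)%N.
  by apply: leq_trans (size_polyD _ _) _; rewrite geq_max sU sV.
have sB : (size B <= m.+1)%N.
  by apply: leq_trans (size_polyD _ _) _; rewrite size_polyN geq_max sU sV.
have gmp : forall P, gm N p P = (gm m.+1 A P + gm m.+1 B P)%N.
  move=> P; rewrite pAB -(gmM P A0 B0 sA sB); congr gm.
  by rewrite eN; clear; lia.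
have two0 : (2%:R : C) != 0 by rewrite pnatr_eq0.
have AmB : A - B = V *+ 2 by rewrite /A /B; ring.
have ApB : A + B = U *+ 2 by rewrite /A /B; ring.
have disj : forall P, gm m.+1 A P = 0%N \/ gm m.+1 B P = 0%N.
  case=> [x|] /=.
    case: (boolP (root A x)) => rA; last by left; rewrite mupNroot.
    case: (boolP (root B x)) => rB; last by right; rewrite mupNroot.
    exfalso.
    have hV : V.[x] = 0.
      have := congr1 (fun f => f.[x]) AmB.
      rewrite /= hornerD hornerN (rootP rA) (rootP rB) subr0 hornerMn => /esym/eqP.
      by rewrite mulrn_eq0 /= => /eqP.
    have hU : U.[x] = 0.
      have := congr1 (fun f => f.[x]) ApB.
      rewrite /= hornerD (rootP rA) (rootP rB) addr0 hornerMn => /esym/eqP.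
      by rewrite mulrn_eq0 /= => /eqP.
    have hS : S.[x] = 0.
      by move: hV; rewrite /V hornerZ => /eqP; rewrite mulf_eq0 (negbTE ic10) => /eqP.
    have hR : R.[x] = 0.
      by move: hU; rewrite /U hornerZ => /eqP; rewrite mulf_eq0 (negbTE c20) => /eqP.
    have hq : q.[x] = 0 by rewrite Dq hornerZ horner_exp hS expr0n mulr0.
    have hpq : (p - q).[x] = 0 by rewrite Dpq hornerZ horner_exp hR expr0n mulr0.
    have rp : root p x.
      by apply/rootP; move: hpq; rewrite hornerD hornerN hq subr0.
    by have := coprimep_root cop rp; rewrite hq eqxx.
  have [hA|hA] := posnP (m.+1 - size A)%N; first by left.
  have [hB|hB] := posnP (m.+1 - size B)%N; first by right.
  exfalso.
  have sA' : (size A <= m)%N by move: hA; clear; lia.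
  have sB' : (size B <= m)%N by move: hB; clear; lia.
  have sV' : (size V <= m)%N.
    have : size (V *+ 2) = size V by rewrite -scaler_nat size_scale.
    move=> <-; rewrite -AmB; apply: leq_trans (size_polyD _ _) _.
    by rewrite size_polyN geq_max sA' sB'.
  have sU' : (size U <= m)%N.
    have : size (U *+ 2) = size U by rewrite -scaler_nat size_scale.
    move=> <-; rewrite -ApB; apply: leq_trans (size_polyD _ _) _.
    by rewrite geq_max sA' sB'.
  have sS' : (size S <= m)%N by move: sV'; rewrite /V size_scale.
  have sR' : (size R <= m)%N by move: sU'; rewrite /U size_scale.
  have m1 : (1 <= m)%N by move: degN; rewrite eN; clear; lia.
  have sq' : (size q < N)%N.
    rewrite Dq; apply: leq_ltn_trans (size_scale_leq _ _) _.
    apply: leq_ltn_trans (size_poly_exp_leq _ _) _.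
    rewrite eN; move: sS' m1; clear; lia.
  have spq' : (size (p - q)%R < N)%N.
    rewrite Dpq; apply: leq_ltn_trans (size_scale_leq _ _) _.
    apply: leq_ltn_trans (size_poly_exp_leq _ _) _.
    rewrite eN; move: sR' m1; clear; lia.
  have sp' : (size p < N)%N.
    have -> : p = (p - q) + q by rewrite subrK.
    by apply: leq_ltn_trans (size_polyD _ _) _; rewrite gtn_max spq' sq'.
  move: sp' sq'; rewrite /N; clear; lia.
case: F0 => s0 [us0 cov0 pm0].
have cov0' : forall P, (0 < gm N p P)%N -> P \in s0.
  by move=> P HP; apply: cov0; rewrite fmultE /= scale0r subr0.
have sumA : (\sum_(P <- s0) gm m.+1 A P)%N = m.
  apply: (gm_sum (ltnSn _) A0 sA us0) => P HP; apply: cov0'.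
  by rewrite gmp; move: HP; clear; lia.
have sumB : (\sum_(P <- s0) gm m.+1 B P)%N = m.
  apply: (gm_sum (ltnSn _) B0 sB us0) => P HP; apply: cov0'.
  by rewrite gmp; move: HP; clear; lia.
exists [seq (gm m.+1 A P, gm m.+1 B P) | P <- s0]; split.
- rewrite -map_comp (_ : map _ s0 = [seq fmult p q P (Some 0) | P <- s0]) //.
  apply: eq_map => P /=; rewrite fmultE /= scale0r subr0 gmp //.
- apply/allP => x /mapP [P _ ->] /=.
  by case: (disj P) => ->; rewrite eqxx ?orbT.
- by rewrite -!map_comp !sumnE !big_map sumA sumB.
Qed.

Theorem mainTheorem12 (C : numClosedFieldType) :
  ~ exists_Belyi C [:: 5; 3]%N [:: 2; 2; 2; 2]%N [:: 2; 2; 2; 2]%N /\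
  ~ exists_Belyi C [:: 5; 4; 3]%N [:: 2; 2; 2; 2; 2; 2]%N [:: 2; 2; 2; 2; 4]%N.
Proof.
split.
- case=> p [q H]; have [r [pm al sm]] := key_split H erefl erefl.
  exact: (no_split1 pm al sm).
- case=> p [q H]; have [r [pm al sm]] := key_split H erefl erefl.
  exact: (no_split2 pm al sm).
Qed.
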